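(* Work in the category of all topological spaces. Let $S=\{o,c\}$ be the Sierpinski space with $\{o\}$ open and $c$ closed (so $c\in\overline{\{o\}}$), and let $\iota:\{o\}\to S$ be the inclusion of the open point. Let $Q$ be the class of those continuous maps $p:X\to Y$ belonging to $\{\iota\}^{r}$ such that both $X$ and $Y$ have fewer than $5$ points. Then: (a) every map in $(Q)^{lr}$ is proper; (b) a continuous map between ''nice'' spaces is proper iff it belongs to $(Q)^{lr}$; (c) in particular, a Hausdorff space $K$ is compact iff the map $K\to\{o\}$ to a one-point space belongs to $(Q)^{lr}$.
   Context: For morphisms $i:A\to B$ and $p:X\to Y$, $i\rightthreetimes p$ means: for all $f:A\to X$, $g:B\to Y$ with $p\circ f=g\circ i$ there is $h:B\to X$ with $h\circ i=f$ and $p\circ h=g$. For a class $P$, $P^{l}=\{i:\ i\rightthreetimes p\ \forall p\in P\}$, $P^{r}=\{p:\ i\rightthreetimes p\ \forall i\in P\}$, and $P^{lr}=(P^{l})^{r}$. A continuous map $f:X\to Y$ is proper (in the sense of Bourbaki) if for every topological space $Z$ the map $f\times\mathrm{id}_Z:X\times Z\to Y\times Z$ is closed. A space is ''nice'' if it is Hausdorff and hereditarily normal (every subspace is normal). Compact means every open cover has a finite subcover. *)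

(* Defs.v *)
From HB Require Import structures.
From mathcomp Require Import all_boot all_order all_algebra.
From mathcomp Require Import all_classical all_reals.
From mathcomp Require Import topology.
From mathcomp Require Import subtype_topology.
Set Implicit Arguments. Unset Strict Implicit. Unset Printing Implicit Defensive.
Local Open Scope classical_set_scope.

Record Mor := MkMor {
  mdom : topologicalType;
  mcod : topologicalType;
  mfun : mdom -> mcod;
  mcont : continuous mfun }.
Arguments mfun : clear implicits.
Arguments mcont : clear implicits.

Definition lifts (i p : Mor) : Prop :=
  forall (f : mdom i -> mdom p) (g : mcod i -> mcod p),
    continuous f -> continuous g ->
    mfun p \o f = g \o mfun i ->
    exists h : mcod i -> mdom p,
      continuous h /\ h \o mfun i = f /\ mfun p \o h = g.

Definition lclass (P : Mor -> Prop) : Mor -> Prop :=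
  fun i => forall p, P p -> lifts i p.
Definition rclass (P : Mor -> Prop) : Mor -> Prop :=
  fun p => forall i, P i -> lifts i p.
Definition lrclass (P : Mor -> Prop) : Mor -> Prop := rclass (lclass P).

(** Sierpinski space S = {o, c}: carrier bool, o := true, c := false;
    topology generated by the single open set {o}
    (so the opens are set0, [set o], setT). *)
Definition sierpinski : Type := bool.
HB.instance Definition _ := Choice.copy sierpinski bool.
HB.instance Definition _ := isSubBaseTopological.Build sierpinski
  (@setT unit) (fun _ : unit => [set true : sierpinski]).

Definition s_o : sierpinski := true.
Definition s_c : sierpinski := false.

Definition open_pt : topologicalType := set_type [set s_o].
Definition iota_fun : open_pt -> sierpinski := set_val.
Lemma iota_cont : continuous iota_fun.
Proof. exact: (@initial_continuous _ sierpinski set_val). Qed.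
Definition iota : Mor := MkMor iota_cont.

Definition fewer_than_5 (X : topologicalType) : Prop :=
  exists s : seq X, (size s < 5)%N /\ forall x : X, x \in s.

Definition Q : Mor -> Prop := fun p =>
  rclass (fun i => i = iota) p /\ fewer_than_5 (mdom p) /\ fewer_than_5 (mcod p).

Definition closed_map (A B : topologicalType) (f : A -> B) : Prop :=
  forall C : set A, closed C -> closed (f @` C).

Definition proper_map (X Y : topologicalType) (f : X -> Y) : Prop :=
  forall Z : topologicalType,
    closed_map (fun xz : X * Z => (f xz.1, xz.2)).

Definition nice (X : topologicalType) : Prop :=
  hausdorff_space X /\ forall A : set X, normal_space (set_type A).

Definition pt_o : open_pt := exist _ s_o (mem_set erefl).
Definition to_pt (K : topologicalType) : K -> open_pt := fun _ => pt_o.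
Lemma to_pt_cont (K : topologicalType) : continuous (@to_pt K).
Proof. move=> x; exact: cvg_cst. Qed.

(* Main.v *)
Require Import Defs.
From HB Require Import structures.
From mathcomp Require Import all_boot all_order all_algebra.
From mathcomp Require Import all_classical all_reals.
From mathcomp Require Import topology.
From mathcomp Require Import subtype_topology.
From mathcomp Require Import finmap.
Set Implicit Arguments. Unset Strict Implicit. Unset Printing Implicit Defensive.
Local Open Scope classical_set_scope.
Record filt (D : Type) := Filt { fsys :> set_system D; fprop : Filter fsys }.
Arguments fprop {D} f.

Definition adj (D : choiceType) (F : filt D) : Type := option D.
HB.instance Definition _ (D : choiceType) (F : filt D) := Choice.copy (adj F) (option D).
Definition adj_op (D : choiceType) (F : filt D) : set_system (adj F) :=
  fun U => U None -> fsys F (fun d => U (Some d)).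
Section adjS.
Context (D : choiceType) (F : filt D).
Lemma adj_opT : adj_op (@setT (adj F)).
Proof. move=> _; have FF := fprop F; exact: filterT. Qed.
Lemma adj_opI : setI_closed (@adj_op D F).
Proof. move=> A B oA oB [/oA fA /oB fB]; have FF := fprop F.
  exact: (filterI fA fB). Qed.
Lemma adj_op_bigU (I : Type) (f : I -> set (adj F)) :
  (forall i, adj_op (f i)) -> adj_op (\bigcup_i f i).
Proof. move=> H [i _ fi]; have FF := fprop F.
apply: filterS (H i fi) => d fd; by exists i. Qed.
End adjS.
HB.instance Definition _ (D : choiceType) (F : filt D) :=
  isOpenTopological.Build (adj F) (@adj_opT D F) (@adj_opI D F) (@adj_op_bigU D F).

Lemma adj_openE (D : choiceType) (F : filt D) (U : set (adj F)) : open U <-> adj_op U.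
Proof. by []. Qed.

Definition discT (D : choiceType) : Type := D.
HB.instance Definition _ (D : choiceType) := Choice.copy (discT D) D.
HB.instance Definition _ (D : choiceType) :=
  isOpenTopological.Build (discT D) (op := fun _ => True) I (fun _ _ _ _ => I) (fun _ _ _ => I).
Lemma discT_open (D : choiceType) (U : set (discT D)) : open U.
Proof. by []. Qed.

Lemma sub_openE (X : topologicalType) (A : set X) (U : set (set_type A)) :
  open U <-> exists2 O, open O & set_val @^-1` O = U.
Proof. split. move=> [O oO <-]; by exists O. move=> [O oO <-]; by exists O. Qed.
Lemma sier_open_false (U : set sierpinski) : open U -> U false -> forall x, U x.
Proof.
move=> [D' sD' <-] [B DB Bf] x; exists B => //.
move: Bf; simpl; have [DA _ EB] := sD' _ DB. rewrite -EB => Bf.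
move=> i iDA. by have := Bf i iDA.
Qed.
Lemma sier_open_true : open [set true : sierpinski].
Proof.
exists [set [set true : sierpinski]].
  move=> _ ->. exists [fset tt]%fset; first by move=> ? _; rewrite in_setT.
  simpl.
  apply/seteqP; split=> y /=.
    by move=> /(_ tt); apply; rewrite /= inE.
  by move=> -> i.
apply/seteqP; split=> y /=; first by move=> [B -> ]; simpl.
by move=> ->; exists [set true].
Qed.

(* the 3-point space: None = open point m, Some true = a, Some false = b *)
Definition t3 : Type := option bool.
HB.instance Definition _ := Choice.copy t3 (option bool).
Definition t3_op : set_system t3 :=
  fun U => (U (Some true) -> U None) /\ (U (Some false) -> U None).
Lemma t3_opT : t3_op setT. Proof. by []. Qed.
Lemma t3_opI : setI_closed t3_op.
Proof. by move=> A B [a1 a2] [b1 b2]; split=> -[? ?]; split; auto. Qed.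
Lemma t3_op_bigU (I : Type) (f : I -> set t3) :
  (forall i, t3_op (f i)) -> t3_op (\bigcup_i f i).
Proof. by move=> H; split=> -[i _ fi]; exists i => //; have [h1 h2] := H i; auto. Qed.
HB.instance Definition _ := isOpenTopological.Build t3 t3_opT t3_opI t3_op_bigU.
Lemma t3_openE (U : set t3) : open U <-> t3_op U. Proof. by []. Qed.

Lemma pt_eq (w : open_pt) : w = pt_o.
Proof. apply: val_inj => /=; case: w => x /= /set_mem ->. by []. Qed.

Definition p3_fun : t3 -> open_pt := fun _ => pt_o.
Lemma p3_cont : continuous p3_fun. Proof. exact: cst_continuous. Qed.
Definition p3 : Mor := MkMor p3_cont.

Lemma fewer_open_pt : fewer_than_5 open_pt.
Proof. by exists [:: pt_o]; split => // x; rewrite (pt_eq x) inE. Qed.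

Lemma Q_p3 : Q p3.
Proof.
split; last split.
- move=> i -> f g cf cg E; exists (fun _ => f pt_o); split; first exact: cst_continuous.
  split; apply: funext => x /=; first by rewrite (pt_eq x).
  by rewrite (pt_eq (g x)).
- by exists [:: None; Some true; Some false]; split => // -[[]|].
- exact: fewer_open_pt.
Qed.

Definition pc_fun : open_pt -> sierpinski := fun _ => s_c.
Lemma pc_cont : continuous pc_fun. Proof. exact: cst_continuous. Qed.
Definition pc : Mor := MkMor pc_cont.

Lemma Q_pc : Q pc.
Proof.
split; last split.
- move=> i -> f g cf cg E.
  have gt : g true = false.
    have := congr1 (fun F => F pt_o) E => /= <-. by [].
  have gf : g false = false.
    case Eg: (g false) => //.
    have o : open (g @^-1` [set true]) by move/continuousP: cg; apply; exact: sier_open_true.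
    by have := sier_open_false o Eg true; rewrite /= gt.
  exists (fun _ => pt_o); split; first exact: cst_continuous.
  split; apply: funext => x /=; first by rewrite (pt_eq (f x)).
  by case: x => /=; rewrite ?gt ?gf.
- exact: fewer_open_pt.
- by exists [:: (true : sierpinski); (false : sierpinski)]; split => // -[].
Qed.

Lemma lQ_dense (i : Mor) : lclass Q i ->
  forall (b : mcod i) N, nbhs b N -> exists a, N (mfun i a).
Proof.
move=> Hi b N; rewrite nbhsE => -[O [oO Ob] ON].
apply: contrapT => Hn.
pose g : mcod i -> sierpinski := fun x => `[< O x >].
have cg : continuous g.
  apply/continuousP => U oU.
  have [Uf|Uf] := pselect (U false).
    have -> : g @^-1` U = setT.
      by apply/seteqP; split=> // x _; exact: sier_open_false oU Uf _.
    exact: openT.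
  have [Ut|Ut] := pselect (U true).
    have -> : g @^-1` U = O.
      apply/seteqP; split=> x /=; rewrite /g.
        by case: asboolP.
      by move=> Ox; case: asboolP.
    exact: oO.
  have -> : g @^-1` U = set0.
    apply/seteqP; split=> x //=; rewrite /g.
    by case: asboolP.
  exact: open0.
have := Hi pc Q_pc (fun _ => pt_o) g (@cst_continuous _ _ pt_o) cg.
case.
  apply: funext => a /=; rewrite /g /pc_fun; case: asboolP => // Oa.
  by exfalso; apply: Hn; exists a; apply: ON.
move=> h [_ [_ E]].
have := congr1 (fun F => F b) E; rewrite /= /g /pc_fun.
by case: asboolP.
Qed.

Lemma lQ_ext3 (i : Mor) : lclass Q i ->
  forall phi : mdom i -> t3, continuous phi ->
  exists psi : mcod i -> t3, continuous psi /\ psi \o mfun i = phi.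
Proof.
move=> Hi phi cphi.
have [] := Hi p3 Q_p3 phi (fun _ => pt_o) cphi (@cst_continuous _ _ pt_o).
  by apply: funext => a; rewrite /= /p3_fun.
by move=> h [ch [E _]]; exists h.
Qed.

Definition PF (X Y : topologicalType) (f : X -> Y) := forall F : set_system X,
  ProperFilter F -> forall y, f @ F --> y -> exists x, cluster F x /\ f x = y.
Definition regsp (X : topologicalType) := forall (x : X) V, nbhs x V ->
  exists C, [/\ closed C, nbhs x C & C `<=` V].

Lemma sep3 (X : topologicalType) (x1 x2 : X) : hausdorff_space X -> regsp X ->
  x1 <> x2 -> exists Ca Cb : set X, [/\ closed Ca, closed Cb, nbhs x1 Ca, nbhs x2 Cb &
     forall y, Ca y -> Cb y -> False].
Proof.
move=> hX rX /eqP n12; move: hX; rewrite open_hausdorff => /(_ _ _ n12).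
case=> -[U1 U2] /= [/set_mem x1U /set_mem x2U] [oU1 oU2 /eqP U0].
have [Ca [cCa nCa sCa]] := rX x1 U1 (open_nbhs_nbhs (conj oU1 x1U)).
have [Cb [cCb nCb sCb]] := rX x2 U2 (open_nbhs_nbhs (conj oU2 x2U)).
exists Ca, Cb; split => // y /sCa ? /sCb ?.
by have : (U1 `&` U2) y by [] ; rewrite U0.
Qed.

Definition qmap (X : topologicalType) (Ca Cb : set X) (x : X) : t3 :=
  if `[< Ca x >] then Some true else if `[< Cb x >] then Some false else None.

Lemma qmap_cont (X : topologicalType) (Ca Cb : set X) : closed Ca -> closed Cb ->
  (forall y, Ca y -> Cb y -> False) -> continuous (qmap Ca Cb).
Proof.
move=> cA cB dAB; apply/continuousP => U /t3_openE [Ut Uf].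
rewrite openE => x /= Ux.
have key : exists2 N, nbhs x N & forall y, N y -> qmap Ca Cb y = qmap Ca Cb x \/ qmap Ca Cb y = None.
  rewrite /qmap; case: (asboolP (Ca x)) => xA.
    exists (~` Cb); first by apply: open_nbhs_nbhs; split; [exact: closed_openC|move=> xB; exact: (dAB _ xA xB)].
    by move=> y nB; case: (asboolP (Ca y)) => _; [left|right; case: (asboolP (Cb y))].
  case: (asboolP (Cb x)) => xB.
    exists (~` Ca); first by apply: open_nbhs_nbhs; split; [exact: closed_openC|].
    by move=> y nA; case: (asboolP (Ca y)) => // _; case: (asboolP (Cb y)) => _; [left|right].
  exists (~` Ca `&` ~` Cb).
    apply: open_nbhs_nbhs; split; [apply: openI; exact: closed_openC|by split].
  by move=> y [nA nB]; right; case: (asboolP (Ca y)) => //; case: (asboolP (Cb y)).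
case: key => N Nx HN; apply: filterS Nx => y /HN [E|E]; rewrite /preimage /= E //.
by move: Ux; case: (qmap Ca Cb x) => [[]|] //; auto.
Qed.

Definition Fb (i : Mor) (X : Type) (u : mdom i -> X) (b : mcod i) : set_system X :=
  [set S | exists2 N, nbhs b N & forall a, N (mfun i a) -> S (u a)].

Lemma Fb_proper (i : Mor) (X : Type) (u : mdom i -> X) b :
  lclass Q i -> ProperFilter (Fb u b).
Proof.
move=> Hi; apply: Build_ProperFilter_ex.
  move=> S [N Nb NS]; have [a Na] := lQ_dense Hi Nb; by exists (u a); apply: NS.
split.
- by exists setT => //; exact: filterT.
- move=> S T [N1 n1 h1] [N2 n2 h2]; exists (N1 `&` N2); first exact: filterI.
  by move=> a [/h1 ? /h2 ?].
- by move=> S T ST [N n h]; exists N => // a /h /ST.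
Qed.

Lemma Fb_nbhs (i : Mor) (X : topologicalType) (u : mdom i -> X) b (U : set t3) psi phi:
  continuous psi -> psi \o mfun i = phi \o u -> open U -> U (psi b) ->
  Fb u b [set x | U (phi x)].
Proof.
move=> cpsi E oU Ub; exists (psi @^-1` U).
  by apply: open_nbhs_nbhs; split => //; move/continuousP: cpsi; apply.
by move=> a /=; have := congr1 (fun F => F a) E => /= ->.
Qed.

Lemma uniq_cluster (i : Mor) (X : topologicalType) (u : mdom i -> X) :
  lclass Q i -> continuous u -> hausdorff_space X -> regsp X ->
  forall b x1 x2, cluster (Fb u b) x1 -> cluster (Fb u b) x2 -> x1 = x2.
Proof.
move=> Hi cu hX rX b x1 x2 c1 c2; apply: contrapT => n12.
have [Ca [Cb [cA cB nA nB dAB]]] := sep3 hX rX n12.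
have cq := qmap_cont cA cB dAB.
have [psi [cpsi E]] := lQ_ext3 Hi (fun a => continuous_comp (cu a) (cq (u a))).
have E' : psi \o mfun i = qmap Ca Cb \o u by [].
case Eb: (psi b) => [[]|].
- have FS := @Fb_nbhs _ _ u b ([set z | z <> Some false]) _ _ cpsi E' ltac:(by apply/t3_openE; split) ltac:(by rewrite Eb).
  have [y [Sy By]] := c2 _ _ FS nB.
    apply: Sy; rewrite /qmap; case: (asboolP (Ca y)) => [Ay|_]; first by case: (dAB _ Ay By).
    by case: (asboolP (Cb y)).
- have FS := @Fb_nbhs _ _ u b ([set z | z <> Some true]) _ _ cpsi E' ltac:(by apply/t3_openE; split) ltac:(by rewrite Eb).
  have [y [Sy Ay]] := c1 _ _ FS nA.
    by apply: Sy; rewrite /qmap; case: (asboolP (Ca y)).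
- have FS := @Fb_nbhs _ _ u b ([set z | z = None]) _ _ cpsi E' ltac:(by apply/t3_openE; split) ltac:(by rewrite Eb).
  have [y [Sy Ay]] := c1 _ _ FS nA.
    move: Sy; rewrite /qmap /=; case: (asboolP (Ca y)) => // nAy; by case: (nAy Ay).
Qed.

Lemma core (X Y : topologicalType) (f : X -> Y) (cf : continuous f) :
  hausdorff_space X -> regsp X -> PF f -> lrclass Q (MkMor cf).
Proof.
move=> hX rX pF i Hi u v cu cv E.
have E1 : forall a, f (u a) = v (mfun i a).
  by move=> a; have := congr1 (fun F => F a) E.
have uq := uniq_cluster Hi cu hX rX.
have PFb b := Fb_proper u b Hi.
have cvf : forall b, f @ Fb u b --> v b.
  move=> b V Vv; exists (v @^-1` V); first exact: cv.
  by move=> a /=; rewrite E1.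
have ex : forall b, exists x, [/\ cluster (Fb u b) x, f x = v b & Fb u b --> x].
  move=> b; have [x [cx fx]] := pF _ (PFb b) _ (cvf b).
  exists x; split => //.
  move=> V Vx; apply: contrapT => nV.
  pose G := [set S | exists2 T, Fb u b T & T `&` ~` V `<=` S].
  have PG : ProperFilter G.
    apply: Build_ProperFilter_ex.
      move=> S [T FT TS]; apply: contrapT => nS; apply: nV.
      apply: filterS FT => y Ty; apply: contrapT => nVy.
      by apply: nS; exists y; apply: TS.
    split.
    - by exists setT => //; exact: filterT.
    - move=> S1 S2 [T1 F1 h1] [T2 F2 h2]; exists (T1 `&` T2); first exact: filterI.
      by move=> y [[? ?] ?]; split; [apply: h1|apply: h2].
    - by move=> S1 S2 S12 [T F h]; exists T => // y /h /S12.
  have FG : Fb u b `<=` G by move=> S FS; exists S => // y [].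
  have [x' [cx' fx']] := pF _ PG _ (fun W Wv => FG _ (cvf b W Wv)).
  have xx : x' = x.
    apply: uq cx => S T FS Tx; exact: cx' (FG _ FS) Tx.
  have GV : G (~` V) by exists setT; [exact: filterT|by move=> y []].
  rewrite xx in cx'.
  have [y [nVy Vy]] := cx' _ _ GV Vx.
  exact: nVy.
pose h b := projT1 (cid (ex b)).
have hP b : [/\ cluster (Fb u b) (h b), f (h b) = v b & Fb u b --> h b].
  exact: (projT2 (cid (ex b))).
exists h; split; last split.
- move=> b V Vhb.
  have [C [cC nC CV]] := rX _ _ Vhb.
  have [_ _ cvb] := hP b.
  have [N Nb NC] := cvb _ nC.
  apply: filterS (nbhs_interior Nb) => b' Nb'.
  apply: CV; have [cb' _ _] := hP b'.
  move: cC; rewrite closure_id => ->.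
  move=> W Wh; apply: cb' Wh; exists N => //.
- apply: funext => a /=.
  have [ca _ _] := hP (mfun i a).
  apply: (uq (mfun i a)) ca _.
  move=> S W [N Nb NS] Wu.
  have n1 : nbhs a (mfun i @^-1` N) by apply: (mcont i a).
  have n2 : nbhs a (u @^-1` W) by apply: cu.
  have [a' [Na' Wa']] := filter_ex (filterI n1 n2).
  by exists (u a'); split => //; apply: NS.
- by apply: funext => b /=; have [] := hP b.
Qed.

Lemma some_cont (D : choiceType) (F : filt D) : continuous (fun d : discT D => (Some d : adj F)).
Proof. by apply/continuousP. Qed.
Definition testMor (D : choiceType) (F : filt D) : Mor := MkMor (@some_cont D F).

Lemma ultra_fin (D : Type) (T : eqType) (F : set_system D) (f : D -> T) (s : seq T) :
  UltraFilter F -> F [set d | f d \in s] -> exists x0, F [set d | f d = x0].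
Proof.
move=> UF; have PF := @ultra_proper _ _ UF.
elim: s => [|x s IH] Fs.
  exfalso; apply: (filter_not_empty F); apply: filterS Fs => d /=.
  by rewrite in_nil.
have [Fx|Fnx] := in_ultra_setVsetC [set d | f d = x] UF; first by exists x.
apply: IH; apply: filterS (filterI Fs Fnx) => d [] /=.
by rewrite in_cons => /orP [/eqP ->//|].
Qed.

Lemma iota_true (w : open_pt) : iota_fun w = true.
Proof. by rewrite (pt_eq w). Qed.

Lemma adj_lQ (D : choiceType) (F : filt D) : UltraFilter (fsys F) -> lclass Q (testMor F).
Proof.
move=> UF p [Hp [[s [_ hs]] _]] f g cf cg E.
have E1 d : mfun p (f d) = g (Some d) by have := congr1 (fun G => G d) E.
have PF := @ultra_proper _ _ UF.
have FF := @filter_filter _ _ PF.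
have [x0 Fx0] : exists x0, fsys F [set d | f d = x0].
  apply: (@ultra_fin _ _ _ f s UF).
  have -> : [set d | f d \in s] = setT by apply/seteqP; split => // d _; exact: hs.
  exact: filterT.
have spec : forall V, open V -> V (g None) -> V (mfun p x0).
  move=> V oV Vg.
  have : open (g @^-1` V) by move/continuousP: cg; apply.
  move/adj_openE => /(_ Vg) FV.
  have [d [/= Vd fd]] := filter_ex (filterI FV Fx0).
  by rewrite -fd E1.
pose g' : sierpinski -> mcod p := fun t => if t then mfun p x0 else g None.
have cg' : continuous g'.
  apply/continuousP => V oV.
  have [Vg|nVg] := pselect (V (g None)).
    have -> : g' @^-1` V = setT.
      by apply/seteqP; split => // -[] _ /=; [apply: spec|].
    exact: openT.
  have [Vp|nVp] := pselect (V (mfun p x0)).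
    have -> : g' @^-1` V = [set true].
      by apply/seteqP; split => -[] //=.
    exact: sier_open_true.
  have -> : g' @^-1` V = set0 by apply/seteqP; split => -[] //=.
  exact: open0.
have [h' [ch' [Eh1 Eh2]]] := Hp Defs.iota erefl (fun _ => x0) g' (@cst_continuous _ _ x0) cg'
  ltac:(by apply: funext => w /=; rewrite iota_true).
have h't : h' true = x0 by have := congr1 (fun G => G pt_o) Eh1.
have h'f : mfun p (h' false) = g None by have := congr1 (fun G => G false) Eh2.
have spec2 : forall V, open V -> V (h' false) -> V x0.
  move=> V oV Vh.
  have oV' : open (h' @^-1` V) by move/continuousP: ch'; apply.
  by rewrite -h't; apply: (sier_open_false oV' Vh).
pose h : adj F -> mdom p := fun o => if o is Some d then f d else h' false.
exists h; split; last split.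
- apply/continuousP => V oV; apply/adj_openE => /= Vh.
  by apply: filterS Fx0 => d /= ->; apply: spec2.
- by apply: funext.
- by apply: funext => -[d|] //=; rewrite E1.
Qed.

Lemma nbhs_prod (X Z : topologicalType) (x : X) (z : Z) A B :
  nbhs x A -> nbhs z B -> nbhs (x, z) (A `*` B).
Proof. by move=> nA nB; rewrite /nbhs /=; exists (A, B). Qed.

Lemma nbhs_prodP (X Z : topologicalType) (x : X) (z : Z) M :
  nbhs (x, z) M -> exists A B, [/\ nbhs x A, nbhs z B & A `*` B `<=` M].
Proof. by rewrite /nbhs /= => -[[A B] [nA nB] AB]; exists A, B. Qed.

Lemma lr_proper (p : Mor) : lrclass Q p -> proper_map (mfun p).
Proof.
move=> Hp Z C cC [y z] cl.
pose f := mfun p.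
pose G : set_system (mdom p * Z) :=
  [set S | exists2 N, nbhs (y, z) N & forall w, C w -> N (f w.1, w.2) -> S w].
have PG : ProperFilter G.
  apply: Build_ProperFilter_ex.
    move=> S [N nN NS]; have [_ [[w Cw <-] Nw]] := cl N nN.
    by exists w; apply: NS.
  split.
  - by exists setT => //; exact: filterT.
  - move=> S1 S2 [N1 n1 h1] [N2 n2 h2]; exists (N1 `&` N2); first exact: filterI.
    by move=> w Cw [? ?]; split; [apply: h1|apply: h2].
  - by move=> S1 S2 S12 [N n h]; exists N => // w Cw /(h _ Cw) /S12.
have [W [UW GW]] := ultraFilterLemma PG.
pose Fl := Filt (@filter_filter _ _ (@ultra_proper _ _ UW)).
have FW := @filter_filter _ _ (@ultra_proper _ _ UW).
have PW := @ultra_proper _ _ UW.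
pose u : discT (mdom p * Z)%type -> mdom p := fun d => d.1.
pose v : adj Fl -> mcod p := fun o => if o is Some d then f d.1 else y.
have cu : continuous u by apply/continuousP.
have cv : continuous v.
  apply/continuousP => V oV; apply/adj_openE => /= Vy.
  apply: GW; exists (V `*` setT).
    by apply: nbhs_prod; [apply: open_nbhs_nbhs|exact: filterT].
  by move=> w _ [] /=.
have [h [ch [Eh1 Eh2]]] := Hp (testMor Fl) (@adj_lQ _ Fl UW) u v cu cv (funext (fun _ => erefl)).
have fx : f (h None) = y by have := congr1 (fun G => G None) Eh2.
have hS d : h (Some d) = d.1 by have := congr1 (fun G => G d) Eh1.
exists (h None, z); last by rewrite /= -fx.
apply: cC => M /nbhs_prodP [A [B [nA nB AB]]].
have W1 : W [set d | A d.1].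
  move: nA; rewrite nbhsE => -[A' [oA' A'x] A'A].
  have : open (h @^-1` A') by move/continuousP: ch; apply.
  move/adj_openE => /(_ A'x) /=; apply: filterS => d /=; rewrite hS; exact: A'A.
have W2 : W [set d | B d.2].
  apply: GW; exists (setT `*` B) => //; first by apply: nbhs_prod => //; exact: filterT.
  by move=> w _ [].
have W3 : W C.
  by apply: GW; exists setT; [exact: filterT|].
have [d [[Ad Bd] Cd]] := filter_ex (filterI (filterI W1 W2) W3).
by exists d; split => //; apply: AB.
Qed.

Lemma proper_PF (X Y : topologicalType) (f : X -> Y) : proper_map f -> PF f.
Proof.
move=> pf F PF0 y cvF.
have FF := @filter_filter _ _ PF0.
pose Fl := Filt FF.
pose Gam : set (X * adj Fl) := [set w | w.2 = Some w.1].
have cI := pf (adj Fl) (closure Gam) (@closed_closure _ _).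
have : closure [set (f w.1, w.2) | w in closure Gam] (y, None).
  move=> M /nbhs_prodP [A [B [nA nB AB]]].
  have F1 : F (f @^-1` A) by apply: cvF.
  move: nB; rewrite nbhsE => -[B' [oB' B'x] B'B].
  have F2 : F [set d | B' (Some d)] by move/adj_openE: oB'; apply.
  have [d [Ad Bd]] := filter_ex (filterI F1 F2).
  exists (f d, Some d); split; last by apply: AB; split => //; apply: B'B.
  by exists (d, Some d) => //; apply: subset_closure.
move/cI => [[x o] clx /= [fx oN]].
rewrite oN in clx.
exists x; split => // S T FS nT.
pose U : set (adj Fl) := fun o => if o is Some d then S d else True.
have oU : open U by apply/adj_openE => _; apply: filterS FS.
have := clx (T `*` U).
case.
  by apply: nbhs_prod => //; apply: open_nbhs_nbhs; split => //.
move=> [x' o'] [/= E' [Tx' Uo']].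
by exists x'; split => //; move: Uo'; rewrite /Gam /= in E'; rewrite E'.
Qed.

Lemma compact_reg (K : topologicalType) : hausdorff_space K -> compact [set: K] -> regsp K.
Proof.
move=> hK cK x V nV.
have nT : nbhs x setT by exact: filterT.
have := @compact_regular K x setT hK cK nT.
move=> /(_ V nV) [W nW WV]; exists (closure W); split => //.
- exact: closed_closure.
- by apply: filterS nW; exact: subset_closure.
Qed.

Lemma nice_reg (X : topologicalType) : nice X -> regsp X.
Proof.
move=> [hX nX] x V nV.
pose T' := set_type (@setT X).
have nT := nX setT.
pose e : X -> T' := fun y => exist _ y (mem_set (I : setT y)).
have cval : continuous (set_val : T' -> X) := @initial_continuous _ X set_val.
have ce : continuous e.
  apply/continuousP => U /sub_openE [O oO <-].
  by have -> : e @^-1` (set_val @^-1` O) = O.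
have cx : closed [set e x].
  have -> : [set e x] = set_val @^-1` [set x].
    apply/seteqP; split => [y /= -> //|y /= yx].
    by apply: val_inj.
  apply: preimage_closed; first by move=> y _; exact: cval.
  exact/accessible_closed_set1/hausdorff_accessible.
have nV' : nbhs (e x) (set_val @^-1` V) by apply: cval.
have [W sW WV] := nT _ cx (set_val @^-1` V) ltac:(by move=> y /= ->).
exists (e @^-1` closure W); split.
- apply: preimage_closed; first by move=> y _; exact: ce.
  exact: closed_closure.
- apply: ce; apply: filterS (sW (e x) erefl); exact: subset_closure.
- by move=> y /WV.
Qed.

Lemma compact_PF (K : topologicalType) : compact [set: K] -> PF (@to_pt K).
Proof.
move=> cK F PF0 y _.
have FT : F setT by exact: filterT.
have [x [_ cx]] := cK F PF0 FT.
by exists x; split => //; rewrite (pt_eq y) (pt_eq (to_pt x)).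
Qed.

Theorem mainTheorem2 :
  (forall p : Mor, lrclass Q p -> proper_map (mfun p)) /\
  (forall (X Y : topologicalType) (f : X -> Y) (cf : continuous f),
      nice X -> nice Y -> (proper_map f <-> lrclass Q (MkMor cf))) /\
  (forall K : topologicalType, hausdorff_space K ->
      (compact [set: K] <-> lrclass Q (MkMor (@to_pt_cont K)))).
Proof.
split; [|split].
- exact: lr_proper.
- move=> X Y f cf nX nY; split.
    move=> pf; apply: core; [exact: nX.1|exact: nice_reg|exact: proper_PF].
  by move=> H; exact: (lr_proper H).
- move=> K hK; split.
    move=> cK; apply: core => //; [exact: compact_reg|exact: compact_PF].
  move=> H; have pf := proper_PF (lr_proper H).
  move=> F PF0 _.
  have [x [cx _]] := pf F PF0 pt_o (@cvg_cst _ _ _ _ _).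
  by exists x.
Qed.
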